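(* Let $n\ge1$ and $\mathbf t=[t_0,\dots,t_{n-1}]\in\Delta_{n-1}$. The edge weighting $c_{\mathbf t}:E_n\to\mathbb C$, $c_{\mathbf t}(ij) = (-1)^{\mathrm{par}_k(i)}\sqrt{t_k}$ for the edge $ij$ ($i\in U_n$) with $j = i\#k$, is admissible, and $U_n(c_{\mathbf t}) = U_n$.
   Context: For $n\ge1$, identify integers $0\le i<2^n$ with their $n$-digit binary representations $i=\sum_k i_k2^k$; $\mathrm{par}_k(i)=\sum_{\ell=0}^k i_\ell\bmod 2$ and $i\#k$ is $i$ with its $k$-th digit flipped. The hypercube $Q_n$ has vertex classes $U_n=\{i<2^n\mid\mathrm{par}_{n-1}(i)=0\}$, $V_n=\{j<2^n\mid \mathrm{par}_{n-1}(j)=1\}$ and edge set $E_n$ of pairs $ij$ ($i\in U_n$, $j\in V_n$, $j=i\#k$ for some $k<n$); $\mathcal N(x)$ is the set of neighbors of $x$. $\Delta_{n-1}=\{[t_0,\dots,t_{n-1}]\mid t_k\ge0,\sum t_k=1\}$. For $c:E_n\to\mathbb C$, $Q_n(c)=(U_n(c),V_n(c),E_n(c))$ is the subgraph formed by the edges with $c(ij)\ne0$ and their endpoints; $c$ is admissible if $\sum_{i\in\mathcal N(j_1)\cap\mathcal N(j_2)}c(ij_1)\overline{c(ij_2)}=\delta_{j_1j_2}$ for all $j_1,j_2\in V_n(c)$ and $\sum_{j\in\mathcal N(i_1)\cap\mathcal N(i_2)}c(i_1j)\overline{c(i_2j)}=\delta_{i_1i_2}$ for all $i_1,i_2\in U_n(c)$.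 *)

(* Defs.v *)
From HB Require Import structures.
From mathcomp Require Import all_boot all_order all_algebra.
From mathcomp Require Import complex.
From mathcomp Require Import reals.
Set Implicit Arguments. Unset Strict Implicit. Unset Printing Implicit Defensive.
Import Order.TTheory GRing.Theory Num.Theory.
Local Open Scope ring_scope.

Definition bit (i k : nat) : bool := odd (i %/ 2 ^ k)%N.

Definition par (k i : nat) : bool := odd (\sum_(l < k.+1) bit i l)%N.

(* i # k : i with its k-th digit flipped *)
Definition flip (i k : nat) : nat := if bit i k then (i - 2 ^ k)%N else (i + 2 ^ k)%N.

Definition inU (n : nat) (i : 'I_(2 ^ n)) : bool := ~~ par n.-1 i.
Definition inV (n : nat) (j : 'I_(2 ^ n)) : bool := par n.-1 j.

Definition edge (n : nat) (i j : 'I_(2 ^ n)) : bool :=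
  [&& inU i, inV j & [exists k : 'I_n, val j == flip i k]].

Definition nbr (n : nat) (x y : 'I_(2 ^ n)) : bool := edge x y || edge y x.

Section Weightings.
Variable R : realType.
Local Notation C := R[i].

(* An edge weighting c : E_n -> C is represented by a function of the two
   endpoints (i in U_n, j in V_n); only its values on edges are ever used. *)
Definition weighting (n : nat) := 'I_(2 ^ n) -> 'I_(2 ^ n) -> C.

Definition Uc (n : nat) (c : weighting n) : {set 'I_(2 ^ n)} :=
  [set i | [exists j, edge i j && (c i j != 0)]].
Definition Vc (n : nat) (c : weighting n) : {set 'I_(2 ^ n)} :=
  [set j | [exists i, edge i j && (c i j != 0)]].

Definition admissible (n : nat) (c : weighting n) : Prop :=
  (forall j1 j2, j1 \in Vc c -> j2 \in Vc c ->
     \sum_(i | nbr i j1 && nbr i j2) c i j1 * (c i j2)^* = (j1 == j2)%:R) /\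
  (forall i1 i2, i1 \in Uc c -> i2 \in Uc c ->
     \sum_(j | nbr i1 j && nbr i2 j) c i1 j * (c i2 j)^* = (i1 == i2)%:R).

Definition in_simplex (n : nat) (t : 'I_n -> R) : Prop :=
  (forall k, 0 <= t k) /\ \sum_(k < n) t k = 1.

Definition c_t (n : nat) (t : 'I_n -> R) : weighting n :=
  fun i j =>
    if [pick k : 'I_n | val j == flip i k] is Some k
    then (-1) ^+ par k i * (Num.sqrt (t k))%:C%C
    else 0.
End Weightings.

(* Main.v *)
Require Import Defs.
From HB Require Import structures.
From mathcomp Require Import all_boot all_order all_algebra.
From mathcomp Require Import complex.
From mathcomp Require Import reals.
From mathcomp Require Import zify ring.
Import Order.TTheory GRing.Theory Num.Theory.

Lemma bit0n i : bit i 0 = odd i.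
Proof. by rewrite /bit expn0 divn1. Qed.

Lemma bitSn i l : bit i l.+1 = bit i./2 l.
Proof. by rewrite /bit expnS divnMA -divn2 divnAC. Qed.

Lemma bit_bd0 (b : bool) m : bit (b + m.*2) 0 = b.
Proof. by rewrite bit0n oddD odd_double addbF oddb. Qed.

Lemma bit_bdS (b : bool) m l : bit (b + m.*2) l.+1 = bit m l.
Proof. by rewrite bitSn half_bit_double. Qed.

Lemma flip0' i : flip i 0 = ~~ odd i + (i./2).*2.
Proof.
rewrite /flip bit0n expn0; move: (odd_double_half i).
by case: (odd i) => /=; lia.
Qed.

Lemma flipS i k : flip i k.+1 = odd i + (flip i./2 k).*2.
Proof.
rewrite /flip bitSn.
have hi := odd_double_half i.
case B: (bit i./2 k).
  have h : 2 ^ k <= i./2.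
    rewrite leqNgt; apply/negP => lt; move: B; rewrite /bit divn_small //.
  rewrite expnS; move: h hi; set m := i./2; case: (odd i) => /=; lia.
rewrite expnS; move: hi; set m := i./2; case: (odd i) => /=; lia.
Qed.

Lemma bit_flip i k l : bit (flip i k) l = bit i l (+) (l == k).
Proof.
elim: k i l => [|k IH] i l.
  rewrite flip0'; case: l => [|l]; first by rewrite bit_bd0 bit0n addbT.
  by rewrite bit_bdS bitSn addbF.
rewrite flipS; case: l => [|l]; first by rewrite bit_bd0 bit0n addbF.
by rewrite bit_bdS IH bitSn eqSS.
Qed.

Lemma flip_lt n i k : i < 2 ^ n -> k < n -> flip i k < 2 ^ n.
Proof.
elim: n i k => [|n IH] i k // hi hk.
have hi2 : i./2 < 2 ^ n.
  move: hi (odd_double_half i); rewrite expnS.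
  case: (odd i) => /=; lia.
case: k hk => [|k] hk.
  rewrite flip0' expnS; move: hi2; case: (odd i) => /=; lia.
rewrite flipS expnS; move: (IH _ _ hi2 hk); case: (odd i) => /=; lia.
Qed.

Lemma bits_inj_aux n x y : x < 2 ^ n -> y < 2 ^ n ->
  (forall l, bit x l = bit y l) -> x = y.
Proof.
elim: n x y => [|n IH] x y.
  by rewrite expn0; case: x => //; case: y.
move=> hx hy hb.
have h2 z : z < 2 ^ n.+1 -> z./2 < 2 ^ n.
  move=> hz; move: hz (odd_double_half z); rewrite expnS.
  case: (odd z) => /=; lia.
have e : x./2 = y./2 by apply: IH; [exact: h2|exact: h2| move=> l; rewrite -!bitSn].
rewrite -(odd_double_half x) -(odd_double_half y) e -!bit0n hb //.
Qed.

Lemma bits_inj x y : (forall l, bit x l = bit y l) -> x = y.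
Proof.
apply: (@bits_inj_aux (x + y)).
  apply: (leq_trans _ (ltn_expl (x + y) (ltnSn 1))); lia.
apply: (leq_trans _ (ltn_expl (x + y) (ltnSn 1))); lia.
Qed.

Lemma flipK x k : flip (flip x k) k = x.
Proof. by apply: bits_inj => l; rewrite !bit_flip -addbA addbb addbF. Qed.

Lemma flipC x a b : flip (flip x a) b = flip (flip x b) a.
Proof. by apply: bits_inj => l; rewrite !bit_flip -!addbA (addbC (l == b)). Qed.

Lemma flip_injk x a b : flip x a = flip x b -> a = b.
Proof.
move=> /(congr1 (bit^~ a)); rewrite !bit_flip eqxx.
by case: (bit x a) => /=; case: eqP => // ->.
Qed.

Lemma flip_injx x y a : flip x a = flip y a -> x = y.
Proof. by move=> /(congr1 (flip^~ a)); rewrite !flipK. Qed.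

Lemma par0 i : par 0 i = bit i 0.
Proof. by rewrite /par big_ord_recr big_ord0 /= oddb. Qed.

Lemma parS k i : par k.+1 i = par k i (+) bit i k.+1.
Proof. by rewrite /par big_ord_recr /= oddD oddb. Qed.

Lemma par_flip k i m : par k (flip i m) = par k i (+) (m <= k).
Proof.
elim: k => [|k IH]; first by rewrite !par0 bit_flip leqn0 eq_sym.
rewrite !parS IH bit_flip.
case: (ltngtP m k.+1) => h.
- rewrite (_ : m <= k) //; case: (par k i); case: (bit i k.+1) => //.
- have h1 : (m <= k) = false by apply/negbTE; rewrite -ltnNge ltnW.
  rewrite h1; case: (par k i); case: (bit i k.+1) => //.
- subst m; rewrite ltnn; case: (par k i); case: (bit i k.+1) => //.
Qed.

Lemma leq_xor (a b : nat) : a != b -> (a <= b) (+) (b <= a) = true.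
Proof. by case: (ltngtP a b). Qed.

Local Open Scope ring_scope.

Section Main.
Variable R : realType.
Variable n : nat.
Hypothesis hn : (1 <= n)%N.
Local Notation N := (2 ^ n)%N.

Definition fl (x : 'I_N) (k : 'I_n) : 'I_N :=
  Ordinal (@flip_lt n x k (ltn_ord x) (ltn_ord k)).

Lemma flE x k : val (fl x k) = flip x k. Proof. by []. Qed.

Lemma inU_flip (x : 'I_N) k : inU (fl x k) = ~~ inU x.
Proof.
rewrite /inU flE par_flip.
have -> : (k <= n.-1)%N by move: (ltn_ord k); lia.
by rewrite addbT.
Qed.

Lemma nbrV (x y : 'I_N) : inV y -> nbr x y = [exists k, x == fl y k].
Proof.
move=> vy; rewrite /nbr /edge.
have -> : inU y = false by move: vy; rewrite /inU /inV => ->.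
rewrite /= orbF vy /=.
apply/andP/existsP => [[_ /existsP[k /eqP e]]|[k /eqP e]].
  by exists k; apply/eqP/val_inj; rewrite flE e flipK.
subst x.
split; first by rewrite inU_flip /inU -/(inV y) vy.
by apply/existsP; exists k; rewrite flE flipK.
Qed.

Lemma nbrU (x y : 'I_N) : inU x -> nbr x y = [exists k, y == fl x k].
Proof.
move=> ux; rewrite /nbr /edge.
have -> : inV x = false by move: ux; rewrite /inU /inV => /negbTE.
rewrite /= !andbF orbF ux /=.
apply/andP/existsP => [[_ /existsP[k /eqP e]]|[k /eqP e]].
  by exists k; apply/eqP/val_inj; rewrite flE.
subst y.
split; first by rewrite /inV -[par _ _]negbK -/(inU (fl x k)) inU_flip ux.
by apply/existsP; exists k; rewrite flE.
Qed.

Lemma c_t_edge (t : 'I_n -> R) (x y : 'I_N) (k : 'I_n) : val y = flip x k ->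
  c_t t x y = (-1) ^+ par k x * (Num.sqrt (t k))%:C%C.
Proof.
move=> e; rewrite /c_t; case: pickP => [k' /eqP e'|H].
  have -> // : k' = k by apply/val_inj/(@flip_injk x _ _); rewrite -e' e.
by move: (H k); rewrite e eqxx.
Qed.

Lemma common_sum (x1 x2 : 'I_N) (w : 'I_N -> R[i]) :
  let S := \sum_(y | [exists a, y == fl x1 a] && [exists b, y == fl x2 b]) w y in
  (x1 = x2 -> S = \sum_a w (fl x1 a)) /\
  (x1 <> x2 -> S = 0 \/ exists a b : 'I_n, a != b /\ val x2 = flip (flip x1 a) b
       /\ S = w (fl x1 a) + w (fl x1 b)).
Proof.
move=> S; rewrite /S; clear S; split.
  move=> <-.
  rewrite (eq_bigl (mem [set fl x1 a | a in [set: 'I_n]])); last first.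
    move=> y; rewrite andbb /=; apply/existsP/imsetP => [[a /eqP ->]|[a _ ->]].
      by exists a; rewrite ?inE.
    by exists a.
  rewrite big_imset /=; last first.
    move=> a b _ _ /(congr1 val); rewrite !flE => /flip_injk e; exact: val_inj.
  by apply: eq_bigl => a; rewrite inE.
move=> ne.
case: (pickP (fun y => [exists a, y == fl x1 a] && [exists b, y == fl x2 b]))
  => [y0 /andP[/existsP[a /eqP ea] /existsP[b /eqP eb]] | H]; last first.
  by left; rewrite big_pred0.
right.
have e2 : val x2 = flip (flip x1 a) b.
  by move: (congr1 val (etrans (esym ea) eb)); rewrite !flE => ->; rewrite flipK.
have nab : a != b.
  apply/eqP => eab; apply: ne; apply: val_inj; rewrite e2 eab flipK //.
exists a, b; split => //; split => //.
rewrite (eq_bigl (mem [set fl x1 a; fl x1 b])); last first.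
  move=> y /=; rewrite !inE; apply/andP/orP.
    case=> /existsP[a' /eqP ya] /existsP[b' /eqP yb].
    have E (l : nat) : (l == (a' : nat)) =
        (l == (a : nat)) (+) (l == (b : nat)) (+) (l == (b' : nat)).
      move: (congr1 (bit^~ l) (congr1 val (etrans (esym ya) yb))).
      rewrite !flE e2 !bit_flip.
      by case: (bit x1 l); case: (l == (a' : nat)); case: (l == (a : nat));
         case: (l == (b : nat)); case: (l == (b' : nat)).
    case: (eqVneq a' a) => [ea'|na].
      by left; rewrite ya ea'.
    case: (eqVneq a' b) => [eb'|nb].
      by right; rewrite ya eb'.
    exfalso; move: (E a') (E a); rewrite eqxx.
    have na' : ((a' : nat) == a) = false by apply/negbTE.
    have nb' : ((a' : nat) == b) = false by apply/negbTE.
    have nab' : ((a : nat) == b) = false by apply/negbTE.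
    rewrite na' nb' eqxx nab' /=. move=> /esym/eqP <-. by rewrite eq_sym na'.
  case=> /eqP ->.
    split; apply/existsP; first by exists a.
    by exists b; apply/eqP/val_inj; rewrite !flE e2 flipK.
  split; apply/existsP; first by exists b.
  by exists a; apply/eqP/val_inj; rewrite !flE e2 flipC flipK.
rewrite big_setU1 /= ?big_set1 // inE.
apply/eqP => /(congr1 val); rewrite !flE => /flip_injk e.
by move/eqP: nab; apply; apply: val_inj.
Qed.

End Main.
Arguments fl {n}.
Arguments flE {n}.
Arguments inU_flip {n}.
Arguments nbrV {n}.
Arguments nbrU {n}.
Arguments c_t_edge {R n}.
Arguments common_sum {R n}.

Lemma conjR (R : realType) (x : R) : (x%:C%C)^* = x%:C%C.
Proof. exact: conjc_real. Qed.

Lemma conj_sign (R : realType) (b : bool) : ((-1 : R[i]) ^+ b)^* = (-1) ^+ b.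
Proof. by case: b; rewrite ?expr0 ?expr1 ?rmorphN rmorph1. Qed.

Lemma wzero (R : realType) (p q p' q' : bool) (sa sb : R) :
  p (+) q (+) p' (+) q' ->
  ((-1) ^+ p * sa%:C%C) * ((-1) ^+ q * sb%:C%C)^* +
  ((-1) ^+ p' * sb%:C%C) * ((-1) ^+ q' * sa%:C%C)^* = 0.
Proof.
rewrite !rmorphM /= !conj_sign !conjR.
by case: p; case: q; case: p'; case: q' => //= _; rewrite ?expr0 ?expr1; ring.
Qed.

Lemma wdiag (R : realType) (p : bool) (s : R) : 0 <= s ->
  ((-1) ^+ p * (Num.sqrt s)%:C%C) * ((-1) ^+ p * (Num.sqrt s)%:C%C)^* = s%:C%C.
Proof.
move=> s0; rewrite !rmorphM /= conj_sign conjR.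
have -> : s%:C%C = ((Num.sqrt s) ^+ 2)%:C%C by rewrite sqr_sqrtr.
rewrite rmorphXn /=.
by case: p; rewrite ?expr0 ?expr1; ring.
Qed.

Theorem proposition4p8 (R : realType) (n : nat) (hn : (1 <= n)%N)
    (t : 'I_n -> R) (ht : in_simplex t) :
  admissible (c_t t) /\ Uc (c_t t) = [set i | inU i].
Proof.
case: ht => t0 t1.
have sum1 : \sum_(a < n) ((t a)%:C%C : R[i]) = 1.
  by rewrite -rmorph_sum t1.
have bxor (pa pb a b : bool) : a (+) b ->
    pa (+) true (+) (pb (+) a) (+) (pb (+) true) (+) (pa (+) b).
  by case: pa; case: pb; case: a; case: b.
split; first split.
- move=> j1 j2; rewrite !inE => /existsP[i1 /andP[/and3P[_ v1 _] _]].
  move=> /existsP[i2 /andP[/and3P[_ v2 _] _]].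
  rewrite (eq_bigl (fun i => [exists a, i == fl j1 a] && [exists b, i == fl j2 b])); last first.
    by move=> i; rewrite /= (nbrV hn _ _ v1) (nbrV hn _ _ v2).
  have [C1 C2] := common_sum j1 j2 (fun i => c_t t i j1 * (c_t t i j2)^*).
  case: (eqVneq j1 j2) => [e|ne].
    subst j2; rewrite C1 // -sum1; apply: eq_bigr => a _.
    rewrite (c_t_edge t _ _ a) ?flE ?flipK //; exact: wdiag.
  have ne' : j1 <> j2 by apply/eqP.
  case: (C2 ne') => [->|[a [b [nab [e2 ->]]]]]; first by [].
  have e2' : nat_of_ord j2 = flip (flip j1 a) b := e2.
  rewrite (c_t_edge t (fl j1 a) (j1) a); last by rewrite flE flipK.
  rewrite (c_t_edge t (fl j1 a) (j2) b); last by rewrite /= e2'.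
  rewrite (c_t_edge t (fl j1 b) (j1) b); last by rewrite flE flipK.
  rewrite (c_t_edge t (fl j1 b) (j2) a); last by rewrite /= e2' flipC.
  apply: wzero; rewrite !flE !par_flip !leqnn.
  apply: bxor; apply: leq_xor; exact: nab.
- move=> x1 x2; rewrite !inE => /existsP[j1 /andP[/and3P[u1 _ _] _]].
  move=> /existsP[j2 /andP[/and3P[u2 _ _] _]].
  rewrite (eq_bigl (fun j => [exists a, j == fl x1 a] && [exists b, j == fl x2 b])); last first.
    by move=> j; rewrite /= (nbrU hn _ _ u1) (nbrU hn _ _ u2).
  have [C1 C2] := common_sum x1 x2 (fun j => c_t t x1 j * (c_t t x2 j)^*).
  case: (eqVneq x1 x2) => [e|ne].
    subst x2; rewrite C1 // -sum1; apply: eq_bigr => a _.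
    rewrite (c_t_edge t _ _ a) ?flE //; exact: wdiag.
  have ne' : x1 <> x2 by apply/eqP.
  case: (C2 ne') => [->|[a [b [nab [e2 ->]]]]]; first by [].
  have e2' : nat_of_ord x2 = flip (flip x1 a) b := e2.
  rewrite (c_t_edge t (x1) (fl x1 a) a) ?flE //.
  rewrite (c_t_edge t (x2) (fl x1 a) b); last by rewrite /= e2' flipK.
  rewrite (c_t_edge t (x1) (fl x1 b) b) ?flE //.
  rewrite (c_t_edge t (x2) (fl x1 b) a); last by rewrite /= e2' flipC flipK.
  apply: wzero; rewrite e2' !par_flip !leqnn.
  move: (@leq_xor a b nab).
  by case: (par a x1); case: (par b x1); case: (a <= b)%N; case: (b <= a)%N.
- apply/setP => i; rewrite !inE; apply/existsP/idP => [[j /andP[/and3P[-> _ _] _]] // | ui].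
  have [k tk] : exists k, t k != 0.
    case: (pickP (fun k => t k != 0)) => [k tk|H]; first by exists k.
    move: t1; rewrite big1 => [/eqP|k _]; first by rewrite eq_sym oner_eq0.
    by move: (H k) => /negbFE /eqP.
  exists (fl i k); apply/andP; split.
    rewrite /edge ui /inV -[par _ _]negbK -/(inU (fl i k)) (inU_flip hn) ui /=.
    by apply/existsP; exists k.
  rewrite (c_t_edge t _ _ k) // mulf_neq0 ?signr_eq0 //.
  apply/eqP => /(congr1 (@complex.Re R)) /= /eqP; rewrite sqrtr_eq0 => tk0.
  by move: tk; rewrite eq_le tk0 t0.
Qed.
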